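(* Let $(T,\sigma)$ be a leaf-colored tree in which every inner vertex has exactly two children. Then for any three distinct colors $r,s,t$, no connected component of the subgraph of $G(T,\sigma)$ induced by the vertices of colors $r,s,t$ is of Type (C); that is, no such component contains an induced $6$-cycle in which any three consecutive vertices have pairwise distinct colors.
   Context: A planted phylogenetic tree $T$ is a rooted tree with distinguished root $0_T$ of degree $1$, all other non-leaf vertices of degree $\ge3$; $L(T)$ its leaves (excluding $0_T$), $|L(T)|\ge2$. $\preceq_T$ is the ancestor order towards $0_T$; $\mathrm{child}(v)$, $\mathrm{lca}_T$ as usual. $\sigma$ maps $L(T)$ to a set of colors. $y$ is a best match of $x$ if $\sigma(x)\ne\sigma(y)$ and $\mathrm{lca}_T(x,y)\preceq_T\mathrm{lca}_T(x,y')$ for all $y'$ with $\sigma(y')=\sigma(y)$. The RBMG $G(T,\sigma)$ is the vertex-colored undirected graph on $L(T)$ whose edges are the reciprocal best match pairs. A connected component of a 3-colored induced subgraph is of Type (C) if it contains an induced cycle on six vertices such that any three consecutive vertices of the cycle have pairwise distinct colors. *)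

(* Defs.v *)
From mathcomp Require Import all_boot.
Set Implicit Arguments. Unset Strict Implicit. Unset Printing Implicit Defensive.

(* A rooted tree on a finite vertex type V is given by a root [rt] and a
   parent map [par]; [par rt = rt] and every vertex reaches [rt] by
   iterating [par] (so there are no other cycles). *)
Section Tree.
Variables (V : finType) (rt : V) (par : V -> V).

(* anc u v  <->  u ⪯_T v, i.e. v lies on the path from u to the root
   (v is an ancestor of u, or v = u). *)
Definition anc (u v : V) : bool := [exists k : 'I_#|V|.+1, iter k par u == v].

Definition is_child (u v : V) : bool := (par u == v) && (u != rt).
Definition children (v : V) : {set V} := [set u | is_child u v].

Definition leaf (v : V) : bool := (v != rt) && (children v == set0).
Definition inner (v : V) : bool := (v != rt) && ~~ leaf v.

Definition planted_phylo_tree : Prop :=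
  [/\ par rt = rt,
      (forall v, anc v rt),
      #|children rt| = 1,
      (forall v, inner v -> 2 <= #|children v|)
    & 2 <= #|[set v | leaf v]| ].

Definition binary_tree : Prop := forall v, inner v -> #|children v| = 2.

Definition is_lca (x y w : V) : bool :=
  [&& anc x w, anc y w & [forall w', (anc x w' && anc y w') ==> anc w w']].
Definition lca (x y : V) : V := odflt rt [pick w | is_lca x y w].

Variables (C : eqType) (sigma : V -> C).

Definition best_match (x y : V) : bool :=
  [&& leaf x, leaf y, sigma x != sigma y &
      [forall y', (leaf y' && (sigma y' == sigma y)) ==> anc (lca x y) (lca x y')]].

Definition rbmg_edge (x y : V) : bool := best_match x y && best_match y x.

Definition in3 (r s t : C) (x : V) : bool :=
  leaf x && ((sigma x == r) || (sigma x == s) || (sigma x == t)).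
Definition edge3 (r s t : C) : rel V :=
  fun x y => [&& in3 r s t x, in3 r s t y & rbmg_edge x y].

Definition component3 (r s t : C) (x : V) : pred V :=
  fun y => in3 r s t x && connect (edge3 r s t) x y.

Definition succ6 (i : 'I_6) : 'I_6 := ordS i.
Definition hexagon3 (r s t : C) (c : 'I_6 -> V) : Prop :=
  [/\ injective c,
      (forall i, in3 r s t (c i)),
      (forall i j, edge3 r s t (c i) (c j) <-> (j = succ6 i \/ i = succ6 j))
    & (forall i, [/\ sigma (c i) != sigma (c (succ6 i)),
                     sigma (c (succ6 i)) != sigma (c (succ6 (succ6 i)))
                   & sigma (c i) != sigma (c (succ6 (succ6 i)))]) ].

Definition typeC (r s t : C) (K : pred V) : Prop :=
  exists c : 'I_6 -> V, hexagon3 r s t c /\ (forall i, K (c i)).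

End Tree.

(* Main.v *)
Require Import Defs.
From mathcomp Require Import all_boot.
Set Implicit Arguments. Unset Strict Implicit. Unset Printing Implicit Defensive.

Lemma succ6_neq (i : 'I_6) : succ6 i != i.
Proof. by case: i => [[|[|[|[|[|[|?]]]]]] ?]. Qed.
Lemma succ6_a (i : 'I_6) : succ6 i <> succ6 (succ6 (succ6 (succ6 i))).
Proof. by case: i => [[|[|[|[|[|[|?]]]]]] ?] //= /(congr1 val). Qed.
Lemma succ6_b (i : 'I_6) : succ6 (succ6 (succ6 i)) <> succ6 (succ6 i).
Proof. by case: i => [[|[|[|[|[|[|?]]]]]] ?] //= /(congr1 val). Qed.
Lemma succ6_const (f : 'I_6 -> bool) : (forall i, f i = f (succ6 i)) -> forall i, f i = f ord0.
Proof.
move=> H i.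
have E k (Hk : k < 6) : f (Ordinal Hk) = f ord0.
  elim: k Hk => [|k IH] Hk; first by congr f; apply: val_inj.
  rewrite -(IH (ltnW Hk)) [RHS]H; congr f; apply: val_inj => /=.
  by rewrite modn_small.
by case: i => k Hk; apply: E.
Qed.
Lemma col3 (C : eqType) (r s t p q u v : C) : r != s -> s != t -> r != t ->
  (p == r) || (p == s) || (p == t) -> (q == r) || (q == s) || (q == t) ->
  (u == r) || (u == s) || (u == t) -> (v == r) || (v == s) || (v == t) ->
  p != q -> q != u -> p != u -> u != v -> q != v -> v = p.
Proof.
move=> Hrs Hst Hrt.
move=> /orP[/orP[]|] /eqP-> /orP[/orP[]|] /eqP-> /orP[/orP[]|] /eqP-> /orP[/orP[]|] /eqP->;
  rewrite ?eqxx //= ?(eq_sym s r) ?(eq_sym t s) ?(eq_sym t r) ?Hrs ?Hst ?Hrt //.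
Qed.

Section Tr.
Variables (V : finType) (rt : V) (par : V -> V).
Hypothesis Hroot : par rt = rt.
Hypothesis Hreach : forall v, anc par v rt.

Lemma ancE u v : anc par u v = fconnect par u v.
Proof.
apply/existsP/idP.
- by case=> k /eqP <-; apply: fconnect_iter.
- move=> H.
  have Hk : findex par u v < #|V|.+1.
    apply: leq_trans (findex_max H) _; exact: leq_trans (max_card _) (leqnSn _).
  by exists (Ordinal Hk); apply/eqP; apply: iter_findex.
Qed.

Lemma ancI k u : anc par u (iter k par u).
Proof. by rewrite ancE; apply: fconnect_iter. Qed.

Lemma ancP u v : reflect (exists k, iter k par u = v) (anc par u v).
Proof.
apply: (iffP idP).
- by rewrite ancE => H; exists (findex par u v); apply: iter_findex.
- by case=> k <-; apply: ancI.
Qed.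

Lemma anc_refl u : anc par u u.
Proof. exact: (ancI 0). Qed.

Lemma anc_par u : anc par u (par u).
Proof. exact: (ancI 1). Qed.

Lemma anc_trans u v w : anc par u v -> anc par v w -> anc par u w.
Proof. rewrite !ancE; exact: connect_trans. Qed.

Lemma fix_rt v : par v = v -> v = rt.
Proof.
move=> Hv; case/ancP: (Hreach v) => k <-.
by elim: k => //= k <-.
Qed.

Lemma iter_rt k : iter k par rt = rt.
Proof. by elim: k => //= k ->. Qed.

Lemma anc_antisym u v : anc par u v -> anc par v u -> u = v.
Proof.
case/ancP=> k Hk; case/ancP=> m Hm.
case: k Hk => [|k] Hk; first by [].
have Hp : forall n, iter (n * (k.+1 + m)) par u = u.
  by elim=> // n IH; rewrite mulSn iterD IH (addnC k.+1 m) iterD Hk Hm.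
case/ancP: (Hreach u) => j Hj.
have Hu : u = rt.
  have Hle : j <= j.+1 * (k.+1 + m).
    by rewrite mulSn; apply: leq_trans (leq_addl (k.+1 + m) _); rewrite leq_pmulr.
  by rewrite -[LHS](Hp j.+1) -(subnK Hle) iterD Hj iter_rt.
by rewrite -Hk Hu iter_rt.
Qed.

Lemma anc_chain x u v : anc par x u -> anc par x v -> anc par u v || anc par v u.
Proof.
case/ancP=> k <-; case/ancP=> m <-.
case: (leqP k m) => H.
- by rewrite -(subnK H) iterD ancI.
- by rewrite -(subnK (ltnW H)) iterD ancI orbT.
Qed.

Lemma anc_step c v : anc par c v -> v != c -> anc par (par c) v.
Proof.
case/ancP=> [[|k] <-]; first by rewrite eqxx.
by rewrite iterSr => _; apply: ancI.
Qed.

Lemma anc_child x w : anc par x w -> x != w ->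
  exists c, is_child rt par c w && anc par x c.
Proof.
rewrite ancE => H Hne.
have Hk : 0 < findex par x w by rewrite lt0n findex_eq0.
have Hmax := findex_max H.
have Hi := iter_findex H.
exists (iter (findex par x w).-1 par x); rewrite ancI andbT /is_child.
have Hp : par (iter (findex par x w).-1 par x) = w by rewrite -iterS prednK.
rewrite Hp eqxx /=; apply/eqP => Er.
have Ew : w = rt by rewrite -Hp Er Hroot.
have := findex_iter (leq_ltn_trans (leq_pred _) Hmax).
rewrite Er -Ew; move: Hk.
by case: (findex par x w) => //= n _ E; move: (ltnSn n); rewrite -{1}E ltnn.
Qed.

Lemma child_anc c w : is_child rt par c w -> anc par c w.
Proof. by case/andP=> /eqP <- _; apply: anc_par. Qed.

Lemma child_neq c w : is_child rt par c w -> c != w.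
Proof.
case/andP=> /eqP Hp Hc; apply/eqP => E; rewrite -E in Hp.
by move/fix_rt: Hp => E2; rewrite E2 eqxx in Hc.
Qed.

Lemma child_uniq a b w x : is_child rt par a w -> is_child rt par b w ->
  anc par x a -> anc par x b -> a = b.
Proof.
move=> Ha Hb Hxa Hxb.
wlog H : a b Ha Hb Hxa Hxb / anc par a b.
  move=> W; case/orP: (anc_chain Hxa Hxb) => H; first exact: W.
  by apply/esym/W.
case: (eqVneq b a) => [//|Hne].
have := anc_step H Hne; case/andP: (Ha) => /eqP -> _ Hwb.
have E := anc_antisym Hwb (child_anc Hb).
by subst b; move: (child_neq Hb); rewrite eqxx.
Qed.

Lemma anc_findex x u v : anc par x u -> anc par x v ->
  findex par x u <= findex par x v -> anc par u v.
Proof.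
rewrite !ancE => Hu Hv Hle.
rewrite -(iter_findex Hu) -(iter_findex Hv) -(subnK Hle) iterD -ancE.
exact: ancI.
Qed.

Lemma lca_spec x y : is_lca par x y (lca rt par x y).
Proof.
rewrite /lca; case: pickP => [w //|H].
have Hc : anc par x rt && anc par y rt by rewrite !Hreach.
case: (@arg_minnP _ rt (fun w => anc par x w && anc par y w) (fun w => findex par x w) Hc) => w /andP [Hx Hy] Hmin.
have := H w; rewrite /is_lca Hx Hy /=.
move/negbT/negP; case; apply/forallP => w'; apply/implyP => /andP [Hx' Hy'].
by apply: (anc_findex Hx Hx'); apply: Hmin; rewrite Hx'.
Qed.

Lemma lca_l x y : anc par x (lca rt par x y).
Proof. by case/and3P: (lca_spec x y). Qed.
Lemma lca_r x y : anc par y (lca rt par x y).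
Proof. by case/and3P: (lca_spec x y). Qed.
Lemma lca_min x y w : anc par x w -> anc par y w -> anc par (lca rt par x y) w.
Proof.
case/and3P: (lca_spec x y) => _ _ /forallP H Hx Hy.
by move/implyP: (H w); apply; rewrite Hx.
Qed.


Lemma below x a w y : is_child rt par a w -> anc par x a ->
  anc par w (lca rt par x y) = ~~ anc par y a.
Proof.
move=> Ha Hxa.
case Hy: (anc par y a).
- suff : ~~ anc par w (lca rt par x y) by move/negbTE.
  apply/negP => H.
  have Hwa := anc_trans H (lca_min Hxa Hy).
  have E := anc_antisym Hwa (child_anc Ha).
  by move: (child_neq Ha); rewrite E eqxx.
- suff : anc par w (lca rt par x y) by [].
  case/orP: (anc_chain Hxa (lca_l x y)) => H.
  + case: (eqVneq (lca rt par x y) a) => Hm.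
    * by move: (lca_r x y); rewrite Hm Hy.
    * by have := anc_step H Hm; case/andP: Ha => /eqP ->.
  + by move: (anc_trans (lca_r x y) H); rewrite Hy.
Qed.

Lemma lca_cross x y a b w : is_child rt par a w -> is_child rt par b w -> a != b ->
  anc par x a -> anc par y b -> lca rt par x y = w.
Proof.
move=> Ha Hb Hab Hxa Hyb.
apply: anc_antisym.
- by apply: lca_min; [apply: anc_trans Hxa (child_anc Ha)|apply: anc_trans Hyb (child_anc Hb)].
- rewrite (below y Ha Hxa); apply/negP => Hya.
  by move: Hab; rewrite (child_uniq Ha Hb Hya Hyb) eqxx.
Qed.

Lemma bm_cross (C : eqType) (sigma : V -> C) x y a b w :
  is_child rt par a w -> is_child rt par b w -> a != b ->
  anc par x a -> anc par y b ->
  best_match rt par sigma x y =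
  [&& leaf rt par x, leaf rt par y, sigma x != sigma y &
      [forall y', (leaf rt par y' && (sigma y' == sigma y)) ==> ~~ anc par y' a]].
Proof.
move=> Ha Hb Hab Hxa Hyb.
rewrite /best_match (lca_cross Ha Hb Hab Hxa Hyb).
congr (_ && (_ && (_ && _))); apply: eq_forallb => y'.
by rewrite (below y' Ha Hxa).
Qed.

Lemma leaf_anc u v : leaf rt par v -> anc par u v -> u = v.
Proof.
case/andP=> _ /eqP Hc H; apply/eqP; apply/negPn/negP => Hne.
case: (anc_child H Hne) => ch /andP [Hch _].
have : ch \in children rt par v by rewrite inE.
by rewrite Hc inE.
Qed.


Lemma key (C : eqType) (sigma : V -> C) r s t (c : 'I_6 -> V) a b w :
  r != s -> s != t -> r != t ->
  (forall i, in3 rt par sigma r s t (c i)) ->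
  (forall i j, edge3 rt par sigma r s t (c i) (c j) <-> (j = succ6 i \/ i = succ6 j)) ->
  (forall i, [/\ sigma (c i) != sigma (c (succ6 i)),
                     sigma (c (succ6 i)) != sigma (c (succ6 (succ6 i)))
                   & sigma (c i) != sigma (c (succ6 (succ6 i)))]) ->
  is_child rt par a w -> is_child rt par b w -> a != b ->
  (forall j, anc par (c j) a || anc par (c j) b) ->
  forall i, anc par (c i) a -> anc par (c (succ6 i)) b -> False.
Proof.
move=> Hrs Hst Hrt Hin Hedge Hcol Ha Hb Hab Hab2 i Hia Hib.
have Hl j : leaf rt par (c j) by case/andP: (Hin j).
have Hc j : (sigma (c j) == r) || (sigma (c j) == s) || (sigma (c j) == t)
  by case/andP: (Hin j).
have Hba : b != a by rewrite eq_sym.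
have := proj2 (Hedge i (succ6 i)) (or_introl erefl).
case/and3P => _ _ /andP [B1 B2].
rewrite (bm_cross sigma Ha Hb Hab Hia Hib) in B1.
rewrite (bm_cross sigma Hb Ha Hba Hib Hia) in B2.
case/and4P: B1 => _ _ Hne /forallP H1.
case/and4P: B2 => _ _ _ /forallP H2.
set j := succ6 (succ6 (succ6 i)).
have Hcj : sigma (c j) = sigma (c i).
  case: (Hcol i) => h1 h2 h3; case: (Hcol (succ6 i)) => h4 h5 h6.
  exact: (col3 Hrs Hst Hrt (Hc i) (Hc _) (Hc _) (Hc _) h1 h2 h3 h5 h6).
have Hja : anc par (c j) a.
  case/orP: (Hab2 j) => // Hjb.
  by move: (H2 (c j)); rewrite Hl Hcj eqxx Hjb.
have E : edge3 rt par sigma r s t (c j) (c (succ6 i)).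
  rewrite /edge3 !Hin /rbmg_edge.
  rewrite (bm_cross sigma Ha Hb Hab Hja Hib) (bm_cross sigma Hb Ha Hba Hib Hja).
  rewrite !Hl Hcj Hne eq_sym Hne /=.
  apply/andP; split; apply/forallP => y'.
  - exact: H1.
  - by apply: H2.
case: (proj1 (Hedge j (succ6 i)) E) => He.
- exact: (succ6_a He).
- exact: (succ6_b He).
Qed.


Lemma main_sec (C : eqType) (sigma : V -> C) r s t (c : 'I_6 -> V) :
  #|children rt par rt| = 1 -> binary_tree rt par ->
  r != s -> s != t -> r != t -> hexagon3 rt par sigma r s t c -> False.
Proof.
move=> Hrt1 Hbin Hrs Hst Hrt [Hinj Hin Hedge Hcol].
have Hl j : leaf rt par (c j) by case/andP: (Hin j).
pose P w := [forall i, anc par (c i) w].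
have HP : P rt by apply/forallP => i; apply: Hreach.
case: (@arg_minnP _ rt P (fun w => findex par (c ord0) w) HP) => w0 Hw0 Hmin.
have Hmin' w' : P w' -> anc par w0 w'.
  move=> Hw'; apply: (anc_findex (forallP Hw0 ord0) (forallP Hw' ord0)).
  exact: Hmin.
have Hneq i : c i != w0.
  apply/eqP => E.
  have : anc par (c (succ6 i)) (c i) by rewrite E; apply: (forallP Hw0).
  move/(leaf_anc (Hl i))/Hinj => E2.
  by move: (succ6_neq i); rewrite E2 eqxx.
have Hw0rt : w0 != rt.
  apply/eqP => E; subst w0.
  case/cards1P: (introT eqP Hrt1) => ch Hch.
  have Hchc : is_child rt par ch rt.
    have : ch \in children rt par rt by rewrite Hch set11.
    by rewrite inE.
  have Pch : P ch.
    apply/forallP => i.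
    case: (anc_child (forallP Hw0 i) (Hneq i)) => d /andP [Hd Hid].
    suff -> : ch = d by [].
    have : d \in children rt par rt by rewrite inE.
    by rewrite Hch inE => /eqP.
  have E := anc_antisym (Hmin' _ Pch) (child_anc Hchc).
  by move: (child_neq Hchc); rewrite E eqxx.
have Hinner : inner rt par w0.
  rewrite /inner Hw0rt /leaf Hw0rt /=.
  case: (anc_child (forallP Hw0 ord0) (Hneq ord0)) => d /andP [Hd _].
  apply/negP => /eqP H0.
  have : d \in children rt par w0 by rewrite inE.
  by rewrite H0 inE.
case/cards2P: (introT eqP (Hbin _ Hinner)) => a [b [Hab Hch]].
have Ha : is_child rt par a w0.
  have : a \in children rt par w0 by rewrite Hch !inE eqxx.
  by rewrite inE.
have Hb : is_child rt par b w0.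
  have : b \in children rt par w0 by rewrite Hch !inE eqxx orbT.
  by rewrite inE.
have Hba : b != a by rewrite eq_sym.
have Hab2 j : anc par (c j) a || anc par (c j) b.
  case: (anc_child (forallP Hw0 j) (Hneq j)) => d /andP [Hd Hjd].
  have : d \in children rt par w0 by rewrite inE.
  by rewrite Hch !inE => /orP [] /eqP <-; rewrite Hjd ?orbT.
have Hex j : anc par (c j) a -> anc par (c j) b -> False.
  by move=> H1 H2; move: Hab; rewrite (child_uniq Ha Hb H1 H2) eqxx.
have Hnall d : is_child rt par d w0 -> (forall j, anc par (c j) d) -> False.
  move=> Hd H; have Pd : P d by apply/forallP.
  have E := anc_antisym (Hmin' _ Pd) (child_anc Hd).
  by move: (child_neq Hd); rewrite E eqxx.
have Hconst : forall i, anc par (c i) a = anc par (c (succ6 i)) a.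
  move=> i.
  case Hia: (anc par (c i) a); case Hsa: (anc par (c (succ6 i)) a) => //.
  - have Hsb : anc par (c (succ6 i)) b by move: (Hab2 (succ6 i)); rewrite Hsa.
    by case: (key Hrs Hst Hrt Hin Hedge Hcol Ha Hb Hab Hab2 Hia Hsb).
  - have Hib : anc par (c i) b by move: (Hab2 i); rewrite Hia.
    by case: (key Hrs Hst Hrt Hin Hedge Hcol Hb Ha Hba
               (fun j => etrans (orbC _ _) (Hab2 j)) Hib Hsa).
have Hc := succ6_const Hconst.
case H0: (anc par (c ord0) a).
- by apply: (Hnall a Ha) => j; rewrite Hc.
- apply: (Hnall b Hb) => j; move: (Hab2 j); rewrite Hc H0 //.
Qed.

End Tr.

Theorem mainTheorem19 (V : finType) (rt : V) (par : V -> V)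
  (C : eqType) (sigma : V -> C) :
  planted_phylo_tree rt par -> binary_tree rt par ->
  forall r s t : C, r != s -> s != t -> r != t ->
  forall x : V, in3 rt par sigma r s t x ->
  ~ typeC rt par sigma r s t (component3 rt par sigma r s t x).
Proof.
case=> Hroot Hreach Hrt1 _ _ Hbin r s t Hrs Hst Hrt x _ [c [Hh _]].
exact: (main_sec Hroot Hreach Hrt1 Hbin Hrs Hst Hrt Hh).
Qed.
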